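(* $K_{10}$ and $K_{12}-C_{12}$ both have vertex connectivity $9$ and orientable genus $4$. $K_{14}$ and $K_{15}-6K_2$ both have vertex connectivity $13$ and orientable genus $10$. In particular, $K_{10}$ is not the unique graph with vertex connectivity 9 and genus 4, and $K_{14}$ is not the unique graph with vertex connectivity 13 and genus 10.
   Context: $K_{12}-C_{12}$ is $K_{12}$ with the edges of a Hamiltonian cycle removed. $K_{15}-6K_2$ is $K_{15}$ with the edges of a matching of size 6 removed. Genus means the minimum orientable genus of a surface in which the graph embeds. *)

(* Defs.v *)
From HB Require Import structures.
From mathcomp Require Import all_boot.
From mathcomp Require Import fingroup perm.
Set Implicit Arguments. Unset Strict Implicit. Unset Printing Implicit Defensive.

Section Graphs.
Variable T : finType.
Implicit Types (e : rel T).

Definition simple_graph e : Prop := symmetric e /\ irreflexive e.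

Definition connected_minus e (X : {set T}) : Prop :=
  forall x y, x \notin X -> y \notin X ->
    connect [rel a b | [&& e a b, a \notin X & b \notin X]] x y.

Definition k_connected e (k : nat) : Prop :=
  k < #|T| /\ forall X : {set T}, #|X| < k -> connected_minus e X.

Definition vertex_connectivity e (k : nat) : Prop :=
  k_connected e k /\ ~ k_connected e k.+1.

Definition dart e (d : T * T) : bool := e d.1 d.2.

Definition rotation_system e (rho : {perm T * T}) : Prop :=
  [/\ forall d, ~~ dart e d -> rho d = d,
      forall d, dart e d -> dart e (rho d) /\ (rho d).1 = d.1
    & forall d1 d2, dart e d1 -> dart e d2 -> d1.1 = d2.1 -> fconnect rho d1 d2].

Definition face_perm e (rho : {perm T * T}) (d : T * T) : T * T :=
  if dart e d then rho (d.2, d.1) else d.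

(* faces of the induced cellular embedding: orbits of face_perm on darts,
   plus one face for each isolated vertex *)
Definition num_faces e (rho : {perm T * T}) : nat :=
  #|[set [set y | fconnect (face_perm e rho) x y] | x in [set d | dart e d]]|
  + #|[set v | [forall w, ~~ e v w]]|.

Definition num_components e : nat := #|[set [set y | connect e x y] | x : T]|.

(* Euler: for an embedding with c components, V - E + F = 2c - 2g, i.e.
   4g + 2V + 2F = 4c + 2E = 4c + #darts *)
Definition embedding_genus e (rho : {perm T * T}) (g : nat) : Prop :=
  4 * g + 2 * #|T| + 2 * num_faces e rho = 4 * num_components e + #|[set d | dart e d]|.

Definition has_genus e (g : nat) : Prop :=
  (exists rho, rotation_system e rho /\ embedding_genus e rho g) /\
  (forall rho g', rotation_system e rho -> embedding_genus e rho g' -> g <= g').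

End Graphs.

Definition graph_iso (T1 T2 : finType) (e1 : rel T1) (e2 : rel T2) : Prop :=
  exists f : T1 -> T2, bijective f /\ forall x y, e2 (f x) (f y) = e1 x y.

Definition K (n : nat) : rel 'I_n := fun i j => i != j.
Arguments K n : clear implicits.

Definition K12_minus_C12 : rel 'I_12 :=
  fun i j => [&& i != j, (i.+1 %% 12 != j) & (j.+1 %% 12 != i)].

(* K_15 minus the perfect matching {0,1},{2,3},...,{10,11} of size 6 *)
Definition K15_minus_6K2 : rel 'I_15 :=
  fun i j => (i != j) && ~~ [&& i./2 == j./2, i < 12 & j < 12].

(* Main.v *)
Require Import Defs.
From mathcomp Require Import all_boot.
From mathcomp Require Import fingroup perm.
From mathcomp Require Import zify.
Set Implicit Arguments. Unset Strict Implicit. Unset Printing Implicit Defensive.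

Definition toOrd n (i : nat) : option 'I_n :=
  (if i < n as b return (i < n = b -> option 'I_n)
   then fun h => Some (Ordinal h) else fun _ => None) erefl.

Lemma toOrd_val n (x : 'I_n) : toOrd n (val x) = Some x.
Proof.
rewrite /toOrd; case: x => m h /=.
move: (erefl (m < n)); rewrite {2 3}h => h'.
by congr Some; apply: val_inj.
Qed.

Definition ordl n : seq 'I_n := pmap (toOrd n) (iota 0 n).

Lemma mem_ordl n (x : 'I_n) : x \in ordl n.
Proof.
rewrite /ordl mem_pmap; apply/mapP; exists (val x); last by rewrite toOrd_val.
by rewrite mem_iota /= add0n ltn_ord.
Qed.

Lemma uniq_ordl n : uniq (ordl n).
Proof.
apply: (pmap_uniq (g := val)); last exact: iota_uniq.
move=> i; rewrite /toOrd; move: (erefl (i < n)).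
by case: {2 3}(i < n).
Qed.

Definition prodl n : seq ('I_n * 'I_n) := [seq (a, b) | a <- ordl n, b <- ordl n].

Lemma mem_prodl n (d : 'I_n * 'I_n) : d \in prodl n.
Proof. by case: d => a b; apply: allpairs_f; apply: mem_ordl. Qed.

Lemma uniq_prodl n : uniq (prodl n).
Proof. by apply: allpairs_uniq; [apply: uniq_ordl | apply: uniq_ordl | move=> [? ?] [? ?] _ _ []  -> ->]. Qed.

Section EnumS.
Variable T : finType.
Variable s : seq T.
Hypothesis us : uniq s.
Hypothesis ms : forall x, x \in s.

Lemma card_s (P : pred T) : #|[set x | P x]| = count P s.
Proof.
rewrite -size_filter -(card_uniqP (filter_uniq P us)).
by apply: eq_card => x; rewrite inE mem_filter ms andbT.
Qed.

Lemma all_s (P : pred T) : all P s -> forall x, P x.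
Proof. by move=> /allP H x; apply: H. Qed.

Lemma has_s (P : pred T) : has P s -> exists x, P x.
Proof. by move=> /hasP [x _ H]; exists x. Qed.
End EnumS.

Definition ordd n (i : nat) : 'I_n.+1 := odflt ord0 (toOrd n.+1 i).

Lemma uniq_map_inj (T1 T2 : eqType) (f : T1 -> T2) (s : seq T1) :
  uniq (map f s) -> {in s &, injective f}.
Proof.
elim: s => //= a s IH /andP [fa us] x y; rewrite !inE.
case/orP => [/eqP ->|xs]; case/orP => [/eqP ->|ys] //.
- by move=> E; case/negP: fa; rewrite E; apply: map_f.
- by move=> E; case/negP: fa; rewrite -E; apply: map_f.
- exact: IH.
Qed.

Lemma inj_prodl n (f : 'I_n * 'I_n -> 'I_n * 'I_n) :
  uniq (map f (prodl n)) -> injective f.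
Proof. by move=> u x y; apply: (uniq_map_inj u); apply: mem_prodl. Qed.


Section Gen.
Variable T : finType.
Variable e : rel T.
Hypothesis esym : symmetric e.
Hypothesis eirr : irreflexive e.

Section Rho.
Variable rho : {perm T * T}.
Hypothesis rs : rotation_system e rho.
Local Notation fp := (face_perm e rho).

Lemma fp_dart d : dart e d -> dart e (fp d).
Proof.
case: rs => _ H2 _ dd; rewrite /face_perm dd.
by case: (H2 (d.2, d.1)) => //; rewrite /dart /= esym.
Qed.

Lemma fp_tail d : dart e d -> (fp d).1 = d.2.
Proof.
case: rs => _ H2 _ dd; rewrite /face_perm dd.
by case: (H2 (d.2, d.1)) => //; rewrite /dart /= esym.
Qed.

Lemma fp_inj : injective fp.
Proof.
move=> d1 d2.
case: (boolP (dart e d1)) => h1; case: (boolP (dart e d2)) => h2.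
- rewrite /face_perm h1 h2 => /perm_inj [] ab cd.
  by case: d1 d2 ab cd {h1 h2} => [? ?] [? ?] /= -> ->.
- move=> E; have := fp_dart h1; rewrite E /face_perm (negbTE h2).
  by rewrite (negbTE h2).
- move=> E; have := fp_dart h2; rewrite -E /face_perm (negbTE h1).
  by rewrite (negbTE h1).
- by rewrite /face_perm (negbTE h1) (negbTE h2).
Qed.

Lemma fconnect_dart x y : dart e x -> fconnect fp x y -> dart e y.
Proof.
move=> dx /iter_findex <-; elim: (findex _ _ _) => //= n IH.
exact: fp_dart.
Qed.

Hypothesis deg2 : forall v u, e v u -> exists z, z != u /\ e v z.

Lemma orb_ge3 x : dart e x -> 3 <= #|[set y | fconnect fp x y]|.
Proof.
move=> dx.
have dx1 := fp_dart dx; have dx2 := fp_dart dx1.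
have n01 : x != fp x.
  apply/eqP => E; have := fp_tail dx; rewrite -E => E2.
  by move: dx; rewrite /dart E2 eirr.
have n12 : fp x != fp (fp x).
  apply/eqP => E; have := fp_tail dx1; rewrite -E => E2.
  by move: dx1; rewrite /dart E2 eirr.
have n02 : x != fp (fp x).
  apply/eqP => E.
  case: x dx n01 n12 E dx1 dx2 => u v dx n01 n12 E dx1 dx2.
  have t1 := fp_tail dx; have t2 := fp_tail dx1.
  rewrite -E /= in t2.
  have Ey : fp (u, v) = (v, u).
    by case: (fp (u, v)) t1 t2 => a w /= -> ->.
  have fix1 : rho (v, u) = (v, u).
    by move: Ey; rewrite /face_perm dx.
  move: dx1; rewrite Ey /dart /= => evu.
  have [z [zu evz]] := deg2 evu.
  case: rs => _ _ H3.
  have := H3 (v, u) (v, z) evu evz erefl.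
  move/iter_findex; rewrite iter_fix // => [[]] E'.
  by move: zu; rewrite E' eqxx.
set S := [set y | fconnect fp x y].
have sub : {subset [:: x; fp x; fp (fp x)] <= S}.
  move=> y; rewrite !inE => /or3P [] /eqP ->.
  - exact: connect0.
  - exact: fconnect_iter 1 x.
  - exact: fconnect_iter 2 x.
have u3 : uniq [:: x; fp x; fp (fp x)].
  by rewrite /= !inE negb_or n01 n02 n12.
rewrite -[3]/(size [:: x; fp x; fp (fp x)]) -(card_uniqP u3).
by apply: subset_leq_card; apply/subsetP => y /sub.
Qed.

Lemma faces_lb :
  3 * #|[set [set y | fconnect fp x y] | x in [set d | dart e d]]|
    <= #|[set d | dart e d]|.
Proof.
set D := [set d | dart e d].
set P := [set _ | x in D].
have eqP' : P = equivalence_partition (fconnect fp) D.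
  apply: eq_in_imset => x; rewrite inE => dx; apply/setP => y.
  rewrite !inE; case: (boolP (fconnect fp x y)) => h; last by rewrite andbF.
  by rewrite (fconnect_dart dx h).
have part : partition P D.
  rewrite eqP'; apply: equivalence_partitionP => x y z _ _ _.
  rewrite connect0; split => // xy.
  apply/idP/idP => [xz|yz]; last exact: connect_trans xy yz.
  rewrite fconnect_sym in xy; last exact: fp_inj.
  exact: connect_trans xy xz.
rewrite (card_partition part) mulnC -sum_nat_const.
apply: leq_sum => A /imsetP [x]; rewrite inE => dx ->.
exact: orb_ge3.
Qed.

End Rho.
End Gen.


Lemma uniq_flatten_mem (T : eqType) (fs : seq (seq T)) c1 c2 y :
  uniq (flatten fs) -> c1 \in fs -> c2 \in fs -> y \in c1 -> y \in c2 -> c1 = c2.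
Proof.
elim: fs => //= c fs IH; rewrite cat_uniq => /and3P [_ hn uf].
rewrite !inE => /orP [/eqP ->|h1] /orP [/eqP ->|h2] y1 y2 //.
- case/negP: hn; apply/hasP; exists y => //; apply/flattenP; by exists c2.
- case/negP: hn; apply/hasP; exists y => //; apply/flattenP; by exists c1.
- exact: IH.
Qed.

Section Count.
Variable T : finType.
Variables (f : T -> T) (D : {set T}) (fs : seq (seq T)) (x0 : T).
Hypothesis F1 : all (fun c => fcycle f c) fs.
Hypothesis F2 : uniq (flatten fs).
Hypothesis F3 : all (fun c => c != [::]) fs.
Hypothesis F4 : forall d, (d \in D) = (d \in flatten fs).
Hypothesis F5 : uniq fs.

Local Notation orb x := [set y | fconnect f x y].

Lemma head_in c : c \in fs -> head x0 c \in c.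
Proof.
move=> cf; have := allP F3 c cf; by case: c {cf} => //= a c _; rewrite mem_head.
Qed.

Lemma orb_cyc c x : c \in fs -> x \in c -> orb x = [set y | y \in c].
Proof.
move=> cf xc; apply/setP => y; rewrite !inE.
have fc : fcycle f c by exact: (allP F1 c cf).
have := @fconnect_cycle T f c fc x xc y. rewrite /=. move=> ->. done.
Qed.

Lemma count_orbits : #|[set orb x | x in D]| = size fs.
Proof.
set heads := map (head x0) fs.
have hinj : {in fs &, injective (head x0)}.
  move=> c1 c2 h1 h2 E.
  apply: (uniq_flatten_mem F2 h1 h2 (head_in h1)); rewrite E; exact: head_in.
have uh : uniq heads by rewrite map_inj_in_uniq.
set R := [set x | x \in heads].
have E : [set orb x | x in D] = [set orb x | x in R].
  apply/setP => A; apply/imsetP/imsetP => [[x xD ->]|[x xR ->]].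
  - move: xD; rewrite F4 => /flattenP [c cf xc].
    exists (head x0 c); first by rewrite inE; apply/mapP; exists c.
    by rewrite (orb_cyc cf xc) (orb_cyc cf (head_in cf)).
  - exists x => //; move: xR; rewrite inE => /mapP [c cf ->].
    rewrite F4; apply/flattenP; exists c => //; exact: head_in.
rewrite E card_in_imset.
  rewrite -(size_map (head x0) fs) -/heads -(card_uniqP uh).
  by apply: eq_card => x; rewrite inE.
move=> h1 h2; rewrite !inE => /mapP [c1 c1f ->] /mapP [c2 c2f ->] Eo.
have : head x0 c2 \in [set y | y \in c1].
  rewrite -(orb_cyc c1f (head_in c1f)) Eo inE; exact: connect0.
rewrite inE => hc1.
by rewrite (uniq_flatten_mem F2 c1f c2f hc1 (head_in c2f)).
Qed.
End Count.


Section Conn.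
Variable T : finType.
Variable e : rel T.
Variable s : seq T.
Hypothesis us : uniq s.
Hypothesis ms : forall x, x \in s.

Lemma ncomp1 (x0 : T) : (forall x y, connect e x y) -> num_components e = 1.
Proof.
move=> H; rewrite /num_components.
have -> : [set [set y | connect e x y] | x : T] = [set setT].
  apply/setP => A; rewrite inE; apply/imsetP/eqP => [[x _ ->]|->].
  - by apply/setP => y; rewrite !inE H.
  - by exists x0 => //; apply/setP => y; rewrite !inE H.
by rewrite cards1.
Qed.

Lemma diam2 :
  all (fun x => all (fun y => [|| x == y, e x y | has (fun z => e x z && e z y) s]) s) s ->
  forall x y, connect e x y.
Proof.
move=> H x y; have := all_s ms (all_s ms H x) y.
case/or3P => [/eqP ->|xy|/hasP [z _ /andP [xz zy]]].
- exact: connect0.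
- exact: connect1.
- exact: connect_trans (connect1 xz) (connect1 zy).
Qed.

Definition Cn x y := [set z | e x z && e z y].

Lemma kconn_crit k : k < #|T| ->
  all (fun x => all (fun y => [|| x == y, e x y, k <= count (fun z => e x z && e z y) s |
     ((count (fun z => e x z && e z y) s).+1 == k) && has (fun a => has (fun b =>
        [&& ~~ (e x a && e a y), ~~ (e x b && e b y), e x a, e a b & e b y]) s) s]) s) s ->
  k_connected e k.
Proof.
move=> kT H; split => // X Xk x y xX yX.
set r := [rel a b | [&& e a b, a \notin X & b \notin X]].
have step a b : e a b -> a \notin X -> b \notin X -> connect r a b.
  by move=> ab aX bX; apply: connect1; rewrite /= ab aX bX.
have cardC : #|Cn x y| = count (fun z => e x z && e z y) s by rewrite /Cn (card_s us ms).
have := all_s ms (all_s ms H x) y; rewrite -cardC.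
case/or4P => [/eqP ->|xy|kC|/andP [/eqP kC /hasP [a _ /hasP [b _ /and5P [aC bC xa ab yb]]]]].
- exact: connect0.
- exact: step.
- case: (boolP (Cn x y \subset X)) => [sub|].
    by have := subset_leq_card sub; rewrite leqNgt (leq_trans Xk kC).
  case/subsetPn => z; rewrite inE => /andP [xz zy] zX.
  exact: connect_trans (step _ _ xz xX zX) (step _ _ zy zX yX).
- case: (boolP (Cn x y \subset X)) => [sub|].
    have EX : Cn x y == X by rewrite eqEcard sub -ltnS kC.
    have aX : a \notin X by rewrite -(eqP EX) inE.
    have bX : b \notin X by rewrite -(eqP EX) inE.
    exact: connect_trans (step _ _ xa xX aX)
      (connect_trans (step _ _ ab aX bX) (step _ _ yb bX yX)).
  case/subsetPn => z; rewrite inE => /andP [xz zy] zX.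
  exact: connect_trans (step _ _ xz xX zX) (step _ _ zy zX yX).
Qed.

Lemma not_kconn k x y : ~~ e x x -> x != y -> ~~ e x y -> count (e x) s < k ->
  ~ k_connected e k.
Proof.
move=> exx xy exy; rewrite -(card_s us ms) => Xk [_ H].
have := H _ Xk x y; rewrite !inE => /(_ exx exy) /connectP [[|z p]] /=.
  by move=> _ E; move: xy; rewrite E eqxx.
by rewrite !inE => /andP [/and3P [xz _]]; rewrite xz.
Qed.
End Conn.


Section UB.
Variable T : finType.
Variable e : rel T.
Variable rf : T * T -> T * T.
Hypothesis rfinj : injective rf.
Variable rot : T -> seq (T * T).
Hypothesis R0 : forall d, dart e d || (rf d == d).
Hypothesis R1 : forall d, ~~ dart e d || (dart e (rf d) && ((rf d).1 == d.1)).
Hypothesis R2 : forall v, fcycle rf (rot v).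
Hypothesis R3 : forall d, ~~ dart e d || (d \in rot d.1).

Definition rho_of := perm rfinj.

Lemma rs_of : rotation_system e rho_of.
Proof.
split => [d nd|d dd|d1 d2 d1d d2d E]; rewrite /rho_of.
- by rewrite permE; have := R0 d; rewrite (negbTE nd) => /eqP.
- by rewrite permE; have := R1 d; rewrite dd => /andP [-> /eqP].
- have fc : fcycle rf (rot d1.1) by apply: R2.
  have d1in : d1 \in rot d1.1 by have := R3 d1; rewrite d1d.
  have d2in : d2 \in rot d1.1 by have := R3 d2; rewrite d2d E.
  have -> : fconnect rho_of d1 d2 = fconnect rf d1 d2.
    by apply: eq_connect => a b /=; rewrite permE.
  by rewrite (fconnect_cycle fc d1in).
Qed.

Definition fpf (d : T * T) := if dart e d then rf (d.2, d.1) else d.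

Variable fs : seq (seq (T * T)).
Variable x0 : T * T.
Hypothesis F1 : all (fun c => fcycle fpf c) fs.
Hypothesis F2 : uniq (flatten fs).
Hypothesis F3 : all (fun c => c != [::]) fs.
Hypothesis F4 : forall d, dart e d = (d \in flatten fs).
Hypothesis F5 : uniq fs.

Lemma faces_of :
  #|[set [set y | fconnect (face_perm e rho_of) x y] | x in [set d | dart e d]]| = size fs.
Proof.
rewrite -(count_orbits (f := fpf) (D := [set d | dart e d]) x0 F1 F2 F3) //.
  have E : [set [set y | fconnect (face_perm e rho_of) x y] | x in [set d | dart e d]]
      = [set [set y | fconnect fpf x y] | x in [set d | dart e d]].
    apply: eq_imset => x; apply/setP => y; rewrite !inE.
    apply: eq_connect => a b /=; rewrite /face_perm /fpf /rho_of.
    by case: (dart e a) => //; rewrite permE.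
  by rewrite E.
by move=> d; rewrite inE F4.
Qed.
End UB.


Lemma genus_gen (T : finType) (e : rel T) (s : seq T) (g V c : nat) (rf : T * T -> T * T)
  (inj : injective rf) (rt : T -> seq (T * T)) (fs : seq (seq (T * T))) (x0 : T * T) :
  uniq s -> (forall x, x \in s) ->
  all (fun x => all (fun y => e x y == e y x) s) s ->
  all (fun x => ~~ e x x) s ->
  all (fun v => all (fun u => e v u ==> has (fun z => (z != u) && e v z) s) s) s ->
  all (fun v => has (e v) s) s ->
  all (fun v => all (fun w => dart e (v, w) || (rf (v, w) == (v, w))) s) s ->
  all (fun v => all (fun w => ~~ dart e (v, w) ||
         (dart e (rf (v, w)) && ((rf (v, w)).1 == v))) s) s ->
  all (fun v => fcycle rf (rt v)) s ->
  all (fun v => all (fun w => ~~ dart e (v, w) || ((v, w) \in rt v)) s) s ->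
  all (fun c => fcycle (fpf e rf) c) fs ->
  uniq (flatten fs) -> all (fun c => c != [::]) fs ->
  all (fun v => all (fun w => dart e (v, w) == ((v, w) \in flatten fs)) s) s ->
  uniq fs ->
  #|T| = V -> num_components e = c ->
  4 * g + 2 * V + 2 * size fs = 4 * c + size (flatten fs) ->
  (forall g' F, 3 * F <= size (flatten fs) ->
     4 * g' + 2 * V + 2 * F = 4 * c + size (flatten fs) -> g <= g') ->
  has_genus e g.
Proof.
move=> us ms Hs Hi Hd Hn R0 R1 R2 R3 F1 F2 F3 F4 F5 EV Ec Eg Hlb.
have A2 (P : T -> T -> bool) : all (fun x => all (fun y => P x y) s) s -> forall x y, P x y.
  by move=> H x y; apply: (all_s ms (all_s ms H x) y).
have AD (P : T * T -> bool) : all (fun x => all (fun y => P (x, y)) s) s -> forall d, P d.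
  by move=> H [x y]; apply: (A2 (fun x y => P (x, y))).
have esym : symmetric e by move=> x y; apply/eqP; apply: (A2 _ Hs).
have eirr : irreflexive e by move=> x; apply/negbTE; apply: (all_s ms Hi).
have deg2 : forall v u, e v u -> exists z, z != u /\ e v z.
  move=> v u evu; have := A2 _ Hd v u; rewrite evu /= => /hasP [z _ /andP [z1 z2]].
  by exists z.
have F4' : forall d, dart e d = (d \in flatten fs).
  by move=> d; apply/eqP; apply: (AD (fun d => dart e d == (d \in flatten fs))).
have ED : #|[set d | dart e d]| = size (flatten fs).
  rewrite -(card_uniqP F2); apply: eq_card => d; by rewrite inE F4'.
have Eiso : #|[set v | [forall w, ~~ e v w]]| = 0.
  apply: eq_card0 => v; rewrite inE; apply/negP => /forallP H.
  have /hasP [w _ vw] := all_s ms Hn v.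
  by have := H w; rewrite vw.
have R0' := AD (fun d => dart e d || (rf d == d)) R0.
have R1' := AD (fun d => ~~ dart e d || (dart e (rf d) && ((rf d).1 == d.1))) R1.
have R2' : forall v, fcycle rf (rt v) by move=> v; apply: (all_s ms R2).
have R3' : forall d, ~~ dart e d || (d \in rt d.1).
  by case=> v w; apply: (AD (fun d => ~~ dart e d || (d \in rt d.1))).
split.
  exists (rho_of inj); split; first exact: rs_of R0' R1' R2' R3'.
  rewrite /embedding_genus /num_faces (faces_of inj x0 F1 F2 F3 F4' F5).
  by rewrite EV ED Ec Eiso addn0.
move=> rho g' rs; rewrite /embedding_genus /num_faces EV ED Ec Eiso addn0 => E.
have := faces_lb esym eirr rs deg2; rewrite ED => H.
exact: Hlb g' _ H E.
Qed.


Definition R_K10 : seq (seq nat) :=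
  [:: [:: 1; 9; 3; 5; 7; 8; 4; 6; 2];
     [:: 0; 5; 6; 3; 4; 8; 7; 2; 9];
     [:: 0; 6; 8; 9; 1; 7; 4; 3; 5];
     [:: 0; 9; 5; 2; 4; 1; 6; 7; 8];
     [:: 0; 8; 1; 3; 2; 7; 5; 9; 6];
     [:: 0; 8; 6; 1; 2; 3; 9; 4; 7];
     [:: 0; 4; 9; 7; 3; 1; 5; 8; 2];
     [:: 0; 5; 4; 2; 1; 8; 3; 6; 9];
     [:: 0; 9; 2; 6; 5; 3; 7; 1; 4];
     [:: 0; 1; 2; 8; 7; 6; 4; 5; 3]].
Definition F_K10 : seq (seq nat) :=
  [:: [:: 0; 1; 5; 2];
     [:: 0; 2; 6];
     [:: 0; 3; 9];
     [:: 0; 4; 8];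
     [:: 0; 5; 8; 3];
     [:: 0; 6; 4];
     [:: 0; 7; 5];
     [:: 0; 8; 9; 7];
     [:: 0; 9; 1];
     [:: 1; 2; 7];
     [:: 1; 3; 6];
     [:: 1; 4; 3];
     [:: 1; 6; 5];
     [:: 1; 7; 8];
     [:: 1; 8; 4];
     [:: 1; 9; 2];
     [:: 2; 3; 4];
     [:: 2; 4; 7];
     [:: 2; 5; 3];
     [:: 2; 8; 6];
     [:: 2; 9; 8];
     [:: 3; 5; 9];
     [:: 3; 7; 6];
     [:: 3; 8; 7];
     [:: 4; 5; 7];
     [:: 4; 6; 9];
     [:: 4; 9; 5];
     [:: 5; 6; 8];
     [:: 6; 7; 9]].
Definition R_K12C : seq (seq nat) :=
  [:: [:: 2; 4; 8; 6; 9; 3; 10; 5; 7];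
     [:: 3; 6; 4; 9; 5; 10; 7; 11; 8];
     [:: 0; 7; 10; 6; 8; 5; 9; 11; 4];
     [:: 0; 9; 7; 5; 11; 6; 1; 8; 10];
     [:: 0; 2; 11; 7; 9; 1; 6; 10; 8];
     [:: 0; 10; 1; 9; 2; 8; 11; 3; 7];
     [:: 0; 8; 2; 10; 4; 1; 3; 11; 9];
     [:: 0; 5; 3; 9; 4; 11; 1; 10; 2];
     [:: 0; 4; 10; 3; 1; 11; 5; 2; 6];
     [:: 0; 6; 11; 2; 5; 1; 4; 7; 3];
     [:: 0; 3; 8; 4; 6; 2; 7; 1; 5];
     [:: 1; 7; 4; 2; 9; 6; 3; 5; 8]].
Definition F_K12C : seq (seq nat) :=
  [:: [:: 0; 2; 7];
     [:: 0; 3; 9];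
     [:: 0; 4; 2];
     [:: 0; 5; 10];
     [:: 0; 6; 8];
     [:: 0; 7; 5];
     [:: 0; 8; 4];
     [:: 0; 9; 6];
     [:: 0; 10; 3];
     [:: 1; 3; 8];
     [:: 1; 4; 6];
     [:: 1; 5; 9];
     [:: 1; 6; 3];
     [:: 1; 7; 10];
     [:: 1; 8; 11];
     [:: 1; 9; 4];
     [:: 1; 10; 5];
     [:: 1; 11; 7];
     [:: 2; 4; 11];
     [:: 2; 5; 8];
     [:: 2; 6; 10];
     [:: 2; 8; 6];
     [:: 2; 9; 5];
     [:: 2; 10; 7];
     [:: 2; 11; 9];
     [:: 3; 5; 7];
     [:: 3; 6; 11];
     [:: 3; 7; 9];
     [:: 3; 10; 8];
     [:: 3; 11; 5];
     [:: 4; 7; 11];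
     [:: 4; 8; 10];
     [:: 4; 9; 7];
     [:: 4; 10; 6];
     [:: 5; 11; 8];
     [:: 6; 9; 11]].
Definition R_K14 : seq (seq nat) :=
  [:: [:: 1; 5; 3; 13; 7; 2; 8; 10; 9; 6; 12; 11; 4];
     [:: 0; 5; 6; 8; 3; 9; 13; 11; 10; 12; 2; 4; 7];
     [:: 0; 7; 11; 8; 6; 3; 5; 13; 4; 1; 12; 9; 10];
     [:: 0; 5; 2; 6; 9; 1; 8; 10; 11; 7; 4; 12; 13];
     [:: 0; 11; 6; 10; 8; 12; 3; 7; 1; 2; 13; 9; 5];
     [:: 0; 7; 10; 6; 1; 4; 9; 11; 12; 8; 13; 2; 3];
     [:: 0; 9; 3; 2; 8; 1; 5; 10; 4; 11; 13; 7; 12];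
     [:: 0; 8; 9; 12; 6; 13; 10; 5; 1; 4; 3; 11; 2];
     [:: 0; 10; 3; 1; 6; 2; 11; 9; 7; 13; 5; 12; 4];
     [:: 0; 10; 2; 12; 7; 8; 11; 5; 4; 13; 1; 3; 6];
     [:: 0; 4; 6; 5; 7; 13; 12; 1; 11; 3; 8; 2; 9];
     [:: 0; 12; 5; 9; 8; 2; 7; 3; 10; 1; 13; 6; 4];
     [:: 0; 6; 7; 9; 2; 1; 10; 13; 3; 4; 8; 5; 11];
     [:: 0; 3; 12; 10; 7; 6; 11; 1; 9; 4; 2; 5; 8]].
Definition F_K14 : seq (seq nat) :=
  [:: [:: 0; 1; 5; 4];
     [:: 0; 2; 7];
     [:: 0; 3; 5];
     [:: 0; 4; 11];
     [:: 0; 5; 7; 1];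
     [:: 0; 6; 9];
     [:: 0; 7; 8; 13];
     [:: 0; 8; 10; 2];
     [:: 0; 9; 10];
     [:: 0; 10; 4; 8];
     [:: 0; 11; 12];
     [:: 0; 12; 6];
     [:: 0; 13; 3];
     [:: 1; 2; 12];
     [:: 1; 3; 8];
     [:: 1; 4; 2];
     [:: 1; 6; 5];
     [:: 1; 7; 4];
     [:: 1; 8; 6];
     [:: 1; 9; 3];
     [:: 1; 10; 11];
     [:: 1; 11; 13];
     [:: 1; 12; 10];
     [:: 1; 13; 9];
     [:: 2; 3; 6];
     [:: 2; 4; 13];
     [:: 2; 5; 3];
     [:: 2; 6; 8];
     [:: 2; 8; 11];
     [:: 2; 9; 12];
     [:: 2; 10; 9];
     [:: 2; 11; 7];
     [:: 2; 13; 5];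
     [:: 3; 4; 7];
     [:: 3; 7; 11];
     [:: 3; 9; 6];
     [:: 3; 10; 8];
     [:: 3; 11; 10];
     [:: 3; 12; 4];
     [:: 3; 13; 12];
     [:: 4; 5; 9];
     [:: 4; 6; 11];
     [:: 4; 9; 13];
     [:: 4; 10; 6];
     [:: 4; 12; 8];
     [:: 5; 6; 10];
     [:: 5; 8; 12];
     [:: 5; 10; 7];
     [:: 5; 11; 9];
     [:: 5; 12; 11];
     [:: 5; 13; 8];
     [:: 6; 7; 13];
     [:: 6; 12; 7];
     [:: 6; 13; 11];
     [:: 7; 9; 8];
     [:: 7; 10; 13];
     [:: 7; 12; 9];
     [:: 8; 9; 11];
     [:: 10; 12; 13]].
Definition R_K15 : seq (seq nat) :=
  [:: [:: 2; 14; 13; 7; 12; 10; 5; 6; 9; 11; 3; 4; 8];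
     [:: 2; 13; 14; 3; 12; 4; 10; 6; 5; 8; 11; 7; 9];
     [:: 0; 8; 5; 12; 6; 13; 1; 9; 10; 7; 11; 4; 14];
     [:: 0; 11; 6; 12; 1; 14; 5; 9; 13; 10; 8; 7; 4];
     [:: 0; 3; 7; 10; 1; 12; 9; 6; 14; 2; 11; 13; 8];
     [:: 0; 10; 9; 3; 14; 7; 13; 11; 12; 2; 8; 1; 6];
     [:: 0; 5; 1; 10; 13; 2; 12; 3; 11; 8; 14; 4; 9];
     [:: 0; 13; 5; 14; 9; 1; 11; 2; 10; 4; 3; 8; 12];
     [:: 0; 4; 13; 12; 7; 3; 10; 14; 6; 11; 1; 5; 2];
     [:: 0; 6; 4; 12; 13; 3; 5; 10; 2; 1; 7; 14; 11];
     [:: 0; 12; 14; 8; 3; 13; 6; 1; 4; 7; 2; 9; 5];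
     [:: 0; 9; 14; 12; 5; 13; 4; 2; 7; 1; 8; 6; 3];
     [:: 0; 7; 8; 13; 9; 4; 1; 3; 6; 2; 5; 11; 14; 10];
     [:: 0; 14; 1; 2; 6; 10; 3; 9; 12; 8; 4; 11; 5; 7];
     [:: 0; 2; 4; 6; 8; 10; 12; 11; 9; 7; 5; 3; 1; 13]].
Definition F_K15 : seq (seq nat) :=
  [:: [:: 0; 2; 8];
     [:: 0; 3; 11];
     [:: 0; 4; 3];
     [:: 0; 5; 10];
     [:: 0; 6; 5];
     [:: 0; 7; 13];
     [:: 0; 8; 4];
     [:: 0; 9; 6];
     [:: 0; 10; 12];
     [:: 0; 11; 9];
     [:: 0; 12; 7];
     [:: 0; 13; 14];
     [:: 0; 14; 2];
     [:: 1; 2; 9];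
     [:: 1; 3; 14];
     [:: 1; 4; 12];
     [:: 1; 5; 6];
     [:: 1; 6; 10];
     [:: 1; 7; 11];
     [:: 1; 8; 5];
     [:: 1; 9; 7];
     [:: 1; 10; 4];
     [:: 1; 11; 8];
     [:: 1; 12; 3];
     [:: 1; 13; 2];
     [:: 1; 14; 13];
     [:: 2; 4; 11];
     [:: 2; 5; 8];
     [:: 2; 6; 12];
     [:: 2; 7; 10];
     [:: 2; 10; 9];
     [:: 2; 11; 7];
     [:: 2; 12; 5];
     [:: 2; 13; 6];
     [:: 2; 14; 4];
     [:: 3; 4; 7];
     [:: 3; 5; 14];
     [:: 3; 6; 11];
     [:: 3; 7; 8];
     [:: 3; 8; 10];
     [:: 3; 9; 5];
     [:: 3; 10; 13];
     [:: 3; 12; 6];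
     [:: 3; 13; 9];
     [:: 4; 6; 9];
     [:: 4; 8; 13];
     [:: 4; 9; 12];
     [:: 4; 10; 7];
     [:: 4; 13; 11];
     [:: 4; 14; 6];
     [:: 5; 7; 14];
     [:: 5; 9; 10];
     [:: 5; 11; 13];
     [:: 5; 12; 11];
     [:: 5; 13; 7];
     [:: 6; 8; 11];
     [:: 6; 13; 10];
     [:: 6; 14; 8];
     [:: 7; 9; 14];
     [:: 7; 12; 8];
     [:: 8; 12; 13];
     [:: 8; 14; 10];
     [:: 9; 11; 14];
     [:: 9; 13; 12];
     [:: 10; 14; 12];
     [:: 11; 12; 14]].

Definition rotn n (R : seq (seq nat)) (v : 'I_n.+1) : seq ('I_n.+1 * 'I_n.+1) :=
  [seq (v, ordd n w) | w <- nth [::] R v].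
Definition rfn n (e : rel 'I_n.+1) R (d : 'I_n.+1 * 'I_n.+1) :=
  if dart e d then next (@rotn n R d.1) d else d.
Definition fsn n (F : seq (seq nat)) : seq (seq ('I_n.+1 * 'I_n.+1)) :=
  [seq (let g := [seq ordd n x | x <- f] in zip g (rot 1 g)) | f <- F].

Lemma simple_of (T : finType) (e : rel T) (s : seq T) : (forall x, x \in s) ->
  all (fun x => all (fun y => e x y == e y x) s) s -> all (fun x => ~~ e x x) s ->
  simple_graph e.
Proof.
move=> ms Hs Hi; split.
- by move=> x y; apply/eqP; apply: (all_s ms (all_s ms Hs x) y).
- by move=> x; apply/negbTE; apply: (all_s ms Hi).
Qed.

Lemma inj_K10 : injective (@rfn 9 (K 10) R_K10).
Proof. apply: inj_prodl; vm_compute; reflexivity. Qed.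

Lemma genus_K10 : has_genus (K 10) 4.
Proof.
apply: (@genus_gen _ _ (ordl 10) 4 10 1 _ inj_K10 (@rotn 9 R_K10) (@fsn 9 F_K10) (ord0, ord0)).
3-15: (vm_compute; reflexivity).
- exact: uniq_ordl.
- exact: mem_ordl.
- by rewrite card_ord.
- apply: (ncomp1 ord0); apply: (diam2 (s := ordl 10)); [exact: mem_ordl | vm_compute; reflexivity].
- vm_compute; reflexivity.
- have -> : size (flatten (@fsn 9 F_K10)) = 90 by vm_compute.
  move=> g' F; lia.
Qed.

Lemma inj_K12C : injective (@rfn 11 K12_minus_C12 R_K12C).
Proof. apply: inj_prodl; vm_compute; reflexivity. Qed.

Lemma genus_K12C : has_genus K12_minus_C12 4.
Proof.
apply: (@genus_gen _ _ (ordl 12) 4 12 1 _ inj_K12C (@rotn 11 R_K12C) (@fsn 11 F_K12C) (ord0, ord0)).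
3-15: (vm_compute; reflexivity).
- exact: uniq_ordl.
- exact: mem_ordl.
- by rewrite card_ord.
- apply: (ncomp1 ord0); apply: (diam2 (s := ordl 12)); [exact: mem_ordl | vm_compute; reflexivity].
- vm_compute; reflexivity.
- have -> : size (flatten (@fsn 11 F_K12C)) = 108 by vm_compute.
  move=> g' F; lia.
Qed.

Lemma inj_K14 : injective (@rfn 13 (K 14) R_K14).
Proof. apply: inj_prodl; vm_compute; reflexivity. Qed.

Lemma genus_K14 : has_genus (K 14) 10.
Proof.
apply: (@genus_gen _ _ (ordl 14) 10 14 1 _ inj_K14 (@rotn 13 R_K14) (@fsn 13 F_K14) (ord0, ord0)).
3-15: (vm_compute; reflexivity).
- exact: uniq_ordl.
- exact: mem_ordl.
- by rewrite card_ord.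
- apply: (ncomp1 ord0); apply: (diam2 (s := ordl 14)); [exact: mem_ordl | vm_compute; reflexivity].
- vm_compute; reflexivity.
- have -> : size (flatten (@fsn 13 F_K14)) = 182 by vm_compute.
  move=> g' F; lia.
Qed.

Lemma inj_K15 : injective (@rfn 14 K15_minus_6K2 R_K15).
Proof. apply: inj_prodl; vm_compute; reflexivity. Qed.

Lemma genus_K15 : has_genus K15_minus_6K2 10.
Proof.
apply: (@genus_gen _ _ (ordl 15) 10 15 1 _ inj_K15 (@rotn 14 R_K15) (@fsn 14 F_K15) (ord0, ord0)).
3-15: (vm_compute; reflexivity).
- exact: uniq_ordl.
- exact: mem_ordl.
- by rewrite card_ord.
- apply: (ncomp1 ord0); apply: (diam2 (s := ordl 15)); [exact: mem_ordl | vm_compute; reflexivity].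
- vm_compute; reflexivity.
- have -> : size (flatten (@fsn 14 F_K15)) = 198 by vm_compute.
  move=> g' F; lia.
Qed.

Lemma vc_K10 : vertex_connectivity (K 10) 9.
Proof.
split.
- apply: (kconn_crit (s := ordl 10)); [exact: uniq_ordl | exact: mem_ordl | by rewrite card_ord | vm_compute; reflexivity].
- by case; rewrite card_ord.
Qed.

Lemma vc_K14 : vertex_connectivity (K 14) 13.
Proof.
split.
- apply: (kconn_crit (s := ordl 14)); [exact: uniq_ordl | exact: mem_ordl | by rewrite card_ord | vm_compute; reflexivity].
- by case; rewrite card_ord.
Qed.

Lemma vc_K12C : vertex_connectivity K12_minus_C12 9.
Proof.
split.
- apply: (kconn_crit (s := ordl 12)); [exact: uniq_ordl | exact: mem_ordl | by rewrite card_ord | vm_compute; reflexivity].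
- have H := @not_kconn _ _ (ordl 12) (@uniq_ordl 12) (@mem_ordl 12) 10 (ordd 11 0) (ordd 11 1).
  apply: H; vm_compute; reflexivity.
Qed.

Lemma vc_K15 : vertex_connectivity K15_minus_6K2 13.
Proof.
split.
- apply: (kconn_crit (s := ordl 15)); [exact: uniq_ordl | exact: mem_ordl | by rewrite card_ord | vm_compute; reflexivity].
- have H := @not_kconn _ _ (ordl 15) (@uniq_ordl 15) (@mem_ordl 15) 14 (ordd 14 0) (ordd 14 1).
  apply: H; vm_compute; reflexivity.
Qed.

Theorem mainTheorem4 :
  [/\ vertex_connectivity (K 10) 9 /\ has_genus (K 10) 4,
      vertex_connectivity K12_minus_C12 9 /\ has_genus K12_minus_C12 4,
      vertex_connectivity (K 14) 13 /\ has_genus (K 14) 10,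
      vertex_connectivity K15_minus_6K2 13 /\ has_genus K15_minus_6K2 10
    & (exists (T : finType) (e : rel T),
         [/\ simple_graph e, vertex_connectivity e 9, has_genus e 4
           & ~ graph_iso e (K 10)]) /\
      (exists (T : finType) (e : rel T),
         [/\ simple_graph e, vertex_connectivity e 13, has_genus e 10
           & ~ graph_iso e (K 14)])].
Proof.
split; [split; [exact: vc_K10 | exact: genus_K10] | split; [exact: vc_K12C | exact: genus_K12C]
  | split; [exact: vc_K14 | exact: genus_K14] | split; [exact: vc_K15 | exact: genus_K15] | split].
- exists 'I_12, K12_minus_C12; split.
  + apply: (simple_of (s := ordl 12)); [exact: mem_ordl | vm_compute; reflexivity | vm_compute; reflexivity].
  + exact: vc_K12C.
  + exact: genus_K12C.
  + by case=> f [/bij_eq_card]; rewrite !card_ord.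
- exists 'I_15, K15_minus_6K2; split.
  + apply: (simple_of (s := ordl 15)); [exact: mem_ordl | vm_compute; reflexivity | vm_compute; reflexivity].
  + exact: vc_K15.
  + exact: genus_K15.
  + by case=> f [/bij_eq_card]; rewrite !card_ord.
Qed.
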